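(* Let $F$ be a unital formal multiplication on $V$ with associated product $\cdot$ on $k[F]$. For all $x,y\in V$ and $\mu\in k[V]$, $$T(x^*,y^* )(\mu)=\pi_V\big((\mu\cdot y)\cdot x-(\mu\cdot x)\cdot y\big).$$
   Context: $k$ is a field of characteristic $0$; $k[V]$ is the symmetric algebra of $V$ with the coalgebra structure in which elements of $V$ are primitive, counit $\epsilon$, projection $\pi_V$ onto $V$; Sweedler notation. $F\colon k[V]\otimes k[V]\to V$ is unital ($F(\mu\otimes1)=\pi_V(\mu)=F(1\otimes\mu)$), $F'$ its induced coalgebra morphism $F'(\xi)=\sum_{n\ge0}\frac1{n!}F(\xi_{(1)})\cdots F(\xi_{(n)})$, and $\mu\cdot\nu=F'(\mu\otimes\nu)$. Formal vector fields are linear maps $A\colon k[V]\to V$; their bracket is $[A,B](\mu)=\sum B\big(\mu_{(1)}A(\mu_{(2)})\big)-A\big(\mu_{(1)}B(\mu_{(2)})\big)$ (products in the symmetric algebra). Connection: $\mu*v=F(\mu\otimes v)$ for $v\in V$; $\mu\backslash^*u$ is the unique map $k[V]\otimes V\to V$ with $\sum\mu_{(1)}\backslash^*(\mu_{(2)}*v)=\epsilon(\mu)v=\sum\mu_{(1)}*(\mu_{(2)}\backslash^*v)$. Covariant derivative: $\nabla_A(B)(\mu)=\sum B\big(\mu_{(1)}A(\mu_{(2)})\big)-\big(\mu_{(1)}A(\mu_{(2)})\big)*\big(\mu_{(3)}\backslash^*B(\mu_{(4)})\big)$. Torsion: $T(A,B)=\nabla_A(B)-\nabla_B(A)-[A,B]$.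 Adapted field: $v^*(\mu)=\mu*v$. *)

(* Defs.v *)
From HB Require Import structures.
From mathcomp Require Import all_boot all_order all_algebra.
Set Implicit Arguments. Unset Strict Implicit. Unset Printing Implicit Defensive.
Import Order.TTheory GRing.Theory Num.Theory.
Local Open Scope ring_scope.

(* A monomial v_1 ... v_n of k[V] is represented by the word [:: v_1; ...; v_n]*)
(* (the empty word is 1).  A general element of k[V] is represented by a     *)
(* finite formal linear combination of words, i.e. an element of              *)
(* kV V := seq (k * seq V).  A linear map k[V] -> W is the same thing as a    *)
(* family of symmetric multilinear maps V^n -> W, i.e. a function             *)
(* seq V -> W which is symmetric and multilinear (SymMultilin); it is applied *)
(* to combinations by linear extension (lext).  Likewise a linear map         *)
(* k[V] (x) k[V] -> V is a function seq V -> seq V -> V that is symmetric     *)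
(* multilinear in each argument.                                              *)
(* The coproduct (elements of V primitive) of a monomial w is                 *)
(*   Delta(w) = sum over ways of dealing the letters of w into 2 piles,       *)
(* and the iterated coproduct Delta^(m) uses m piles ([deal m w]).            *)

Section FormalMult.
Variables (k : fieldType) (V : lmodType k).

Definition kV := seq (k * seq V).

Fixpoint deal (m : nat) (w : seq V) : seq (seq (seq V)) :=
  match w with
  | [::] => [:: nseq m [::]]
  | v :: w' =>
      flatten [seq [seq set_nth [::] piles i (v :: nth [::] piles i) | i <- iota 0 m]
              | piles <- deal m w']
  end.

Definition pile (p : seq (seq V)) (i : nat) : seq V := nth [::] p i.

Definition SymMultilin (W : lmodType k) (f : seq V -> W) : Prop :=
  (forall a b : seq V, perm_eq a b -> f a = f b) /\
  (forall (a1 a2 : seq V) (c : k) (u v : V),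
      f (a1 ++ (c *: u + v) :: a2) = c *: f (a1 ++ u :: a2) + f (a1 ++ v :: a2)).

Definition lext (W : lmodType k) (f : seq V -> W) (mu : kV) : W :=
  \sum_(p <- mu) p.1 *: f p.2.

Definition vec (v : V) : kV := [:: (1, [:: v])].

Definition ksub (mu nu : kV) : kV := mu ++ [seq (- p.1, p.2) | p <- nu].

Definition piVw (w : seq V) : V := if w is [:: v] then v else 0.
Definition piV (mu : kV) : V := lext piVw mu.

Definition is_bilinear_map (F : seq V -> seq V -> V) : Prop :=
  (forall b, SymMultilin (fun a => F a b)) /\ (forall a, SymMultilin (F a)).

Definition unital (F : seq V -> seq V -> V) : Prop :=
  forall w : seq V, F w [::] = piVw w /\ F [::] w = piVw w.

(* F'(a (x) b) = sum_n 1/n! F(xi_(1)) ... F(xi_(n)), xi = a (x) b, where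
   xi_(i) = a_(i) (x) b_(i).  Terms with n > size a + size b vanish, since they
   contain a factor F(1 (x) 1) = pi_V(1) = 0 (unitality), so the sum is
   truncated there. *)
Definition Fprime (F : seq V -> seq V -> V) (a b : seq V) : kV :=
  flatten [seq [seq ((n`!)%:R^-1, [seq F (pile pa i) (pile pb i) | i <- iota 0 n])
               | pa <- deal n a, pb <- deal n b]
          | n <- iota 0 (size a + size b).+1].

Definition fmul (F : seq V -> seq V -> V) (mu nu : kV) : kV :=
  flatten [seq [seq (p.1 * q.1 * r.1, r.2) | r <- Fprime F p.2 q.2]
          | p <- mu, q <- nu].

(* the left division  mu \* u : k[V] (x) V -> V  (given as a linear map),
   characterised by  sum mu_(1) \* (mu_(2) * v) = eps(mu) v
                    = sum mu_(1) * (mu_(2) \* v),   where mu * v = F(mu (x) v) *)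
Definition is_left_division (F : seq V -> seq V -> V) (ld : seq V -> V -> V) : Prop :=
  (forall v, SymMultilin (fun w => ld w v)) /\
  (forall w (c : k) (u v : V), ld w (c *: u + v) = c *: ld w u + ld w v) /\
  (forall (w : seq V) (v : V),
     \sum_(p <- deal 2 w) ld (pile p 0) (F (pile p 1) [:: v])
       = (if w is [::] then v else 0)) /\
  (forall (w : seq V) (v : V),
     \sum_(p <- deal 2 w) F (pile p 0) [:: ld (pile p 1) v]
       = (if w is [::] then v else 0)).

(* formal vector fields are linear maps k[V] -> V, given on monomials *)
Definition bracket (A B : seq V -> V) (w : seq V) : V :=
  \sum_(p <- deal 2 w) (B (pile p 0 ++ [:: A (pile p 1)])
                        - A (pile p 0 ++ [:: B (pile p 1)])).

Definition nabla (F : seq V -> seq V -> V) (ld : seq V -> V -> V)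
    (A B : seq V -> V) (w : seq V) : V :=
  \sum_(p <- deal 2 w) B (pile p 0 ++ [:: A (pile p 1)])
  - \sum_(p <- deal 4 w)
      F (pile p 0 ++ [:: A (pile p 1)]) [:: ld (pile p 2) (B (pile p 3))].

Definition torsion (F : seq V -> seq V -> V) (ld : seq V -> V -> V)
    (A B : seq V -> V) (w : seq V) : V :=
  nabla F ld A B w - nabla F ld B A w - bracket A B w.

(* adapted field  v^*(mu) = mu * v *)
Definition adapted (F : seq V -> seq V -> V) (v : V) : seq V -> V :=
  fun w => F w [:: v].

End FormalMult.

(* Main.v *)
Require Import Defs.
From HB Require Import structures.
From mathcomp Require Import all_boot all_order all_algebra.
From Stdlib Require Import FunctionalExtensionality.
Set Implicit Arguments. Unset Strict Implicit. Unset Printing Implicit Defensive.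
Import GRing.Theory.
Local Open Scope ring_scope.
Arguments pile : simpl never.


Definition upd (T : Type) (f : nat -> seq T) (i : nat) (v : T) : nat -> seq T :=
  fun m => if m == i then v :: f m else f m.
Definition insf (T : Type) (j : nat) (b : seq T) (f : nat -> seq T) : nat -> seq T :=
  fun i => if (i < j)%N then f i else if i == j then b else f i.-1.

Lemma pile_setv (k : fieldType) (V : lmodType k) (p : seq (seq V)) i v :
  pile (set_nth [::] p i (v :: nth [::] p i)) = upd (pile p) i v.
Proof. apply: functional_extensionality => m. rewrite /pile /upd nth_set_nth /=. by case: eqP => [->|]. Qed.

Lemma pile_nseq (k : fieldType) (V : lmodType k) m :
  pile (nseq m ([::] : seq V)) = fun _ => [::].
Proof. apply: functional_extensionality => i; rewrite /pile nth_nseq; by case: ifP. Qed.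

Lemma deal_cons (k : fieldType) (V : lmodType k) (R : zmodType) m v (w : seq V)
  (Phi : (nat -> seq V) -> R) :
  \sum_(p <- deal m (v :: w)) Phi (pile p) =
  \sum_(p <- deal m w) \sum_(i <- iota 0 m) Phi (upd (pile p) i v).
Proof.
rewrite /= big_flatten /= big_map; apply: eq_bigr => p _.
rewrite big_map; apply: eq_bigr => i _; by rewrite pile_setv.
Qed.

Lemma deal2_cons (k : fieldType) (V : lmodType k) (R : zmodType) v (w : seq V)
  (G : seq V -> seq V -> R) :
  \sum_(q <- deal 2 (v :: w)) G (pile q 0) (pile q 1) =
  \sum_(q <- deal 2 w) (G (v :: pile q 0) (pile q 1) + G (pile q 0) (v :: pile q 1)).
Proof.
rewrite (deal_cons 2 v w (fun g => G (g 0%N) (g 1%N))); apply: eq_bigr => q _.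
by rewrite /= big_cons big_cons big_nil addr0 /upd /=.
Qed.

Lemma deal_size (k : fieldType) (V : lmodType k) m (w : seq V) p :
  p \in deal m w -> forall i, (size (pile p i) <= size w)%N.
Proof.
elim: w m p => [|v w IH] m p /=.
  rewrite inE => /eqP -> i; by rewrite pile_nseq.
move=> /flattenP [s /mapP [piles Hp ->]] /mapP [i _ ->] j.
rewrite pile_setv /upd; case: (j == i) => /=; last exact: leqW (IH _ _ Hp j).
exact: (IH _ _ Hp j).
Qed.

Lemma deal2_nil1 (k : fieldType) (V : lmodType k) (R : zmodType) (w : seq V)
  (Psi : seq V -> R) :
  \sum_(q <- deal 2 w) (match pile q 1 with [::] => Psi (pile q 0) | _ => 0 end) = Psi w.
Proof.
elim: w Psi => [|v w IH] Psi; first by rewrite /= big_seq1.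
rewrite (deal2_cons v w (fun a b => match b with [::] => Psi a | _ => 0 end)).
rewrite -(IH (fun a => Psi (v :: a))); apply: eq_bigr => q _.
by rewrite addr0.
Qed.

Lemma coassoc (k : fieldType) (V : lmodType k) (R : zmodType) (w : seq V)
  (G : seq V -> seq V -> seq V -> R) :
  \sum_(q <- deal 2 w) \sum_(s <- deal 2 (pile q 0)) G (pile s 0) (pile s 1) (pile q 1) =
  \sum_(q <- deal 2 w) \sum_(s <- deal 2 (pile q 1)) G (pile q 0) (pile s 0) (pile s 1).
Proof.
elim: w G => [|v w IH] G; first by rewrite /= !big_seq1.
rewrite (deal2_cons v w (fun a b => \sum_(s <- deal 2 a) G (pile s 0) (pile s 1) b)).
rewrite (deal2_cons v w (fun a b => \sum_(s <- deal 2 b) G a (pile s 0) (pile s 1))).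
transitivity (\sum_(q <- deal 2 w) \sum_(s <- deal 2 (pile q 0))
   ((G (v :: pile s 0) (pile s 1) (pile q 1) + G (pile s 0) (v :: pile s 1) (pile q 1))
    + G (pile s 0) (pile s 1) (v :: pile q 1))).
  apply: eq_bigr => q _; by rewrite (deal2_cons v (pile q 0) (fun a b => G a b (pile q 1))) -!big_split.
rewrite (IH (fun a b c => (G (v :: a) b c + G a (v :: b) c) + G a b (v :: c))).
apply: eq_bigr => q _; rewrite (deal2_cons v (pile q 1) (fun a b => G (pile q 0) a b)) -big_split /=.
apply: eq_bigr => s _; by rewrite addrA.
Qed.



Lemma upd_insf_lt (T : Type) j (b : seq T) f i v : (i < j)%N ->
  upd (insf j b f) i v = insf j b (upd f i v).
Proof.
move=> hij; apply: functional_extensionality => m; rewrite /upd /insf.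
case: (ltngtP m j) => hmj //.
  case: m hmj => [//|m] hmj /=.
  have hm : (i < m)%N := leq_trans hij hmj.
  by rewrite (gtn_eqF (leqW hm)) (gtn_eqF hm).
by subst m; rewrite (gtn_eqF hij).
Qed.

Lemma upd_insf_eq (T : Type) j (b : seq T) f v :
  upd (insf j b f) j v = insf j (v :: b) f.
Proof.
apply: functional_extensionality => m; rewrite /upd /insf.
case: (ltngtP m j) => hmj //=.
Qed.

Lemma upd_insf_gt (T : Type) j (b : seq T) f i v : (j <= i)%N ->
  upd (insf j b f) i.+1 v = insf j b (upd f i v).
Proof.
move=> hji; apply: functional_extensionality => m; rewrite /upd /insf.
case: (ltngtP m j) => hmj.
- rewrite (ltn_eqF (leq_trans hmj (leq_trans hji (leqnSn i)))).
  by rewrite (ltn_eqF (leq_trans hmj hji)).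
- case: m hmj => [//|m] hmj /=. by rewrite eqSS.
- by subst m; rewrite (ltn_eqF (leq_ltn_trans hji (ltnSn i))).
Qed.

Lemma key_ins (R : zmodType) (T : Type) (Phi : (nat -> seq T) -> R) n j b f v :
  (j <= n)%N ->
  \sum_(i <- iota 0 n.+1) Phi (upd (insf j b f) i v) =
  \sum_(i <- iota 0 n) Phi (insf j b (upd f i v)) + Phi (insf j (v :: b) f).
Proof.
move=> hjn.
have e1 : iota 0 n.+1 = iota 0 j ++ j :: [seq 1 + i | i <- iota j (n - j)]%N.
  by rewrite -iotaDl add1n -{1}(subnKC (leqW hjn)) iotaD add0n subSn.
have e2 : iota 0 n = iota 0 j ++ iota j (n - j).
  by rewrite -{1}(subnKC hjn) iotaD.
rewrite e1 e2 !big_cat big_cons big_map /= upd_insf_eq.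
rewrite (@eq_big_seq _ _ _ _ (iota 0 j) (fun i => Phi (upd (insf j b f) i v))
     (fun i => Phi (insf j b (upd f i v)))); last first.
  move=> i; rewrite mem_iota /= => hi; by rewrite upd_insf_lt.
rewrite (@eq_big_seq _ _ _ _ (iota j (n - j)) (fun i => Phi (upd (insf j b f) (1 + i)%N v))
     (fun i => Phi (insf j b (upd f i v)))); last first.
  move=> i; rewrite mem_iota => /andP [hi _]; by rewrite add1n upd_insf_gt.
by rewrite -addrA [X in _ + X]addrC.
Qed.

Lemma deal_nil (k : fieldType) (V : lmodType k) m : deal m ([::] : seq V) = [:: nseq m [::]].
Proof. by []. Qed.

Lemma deal_split (k : fieldType) (V : lmodType k) (R : zmodType) (w : seq V) :
  forall n j (Phi : (nat -> seq V) -> R), (j <= n)%N ->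
  \sum_(p <- deal n.+1 w) Phi (pile p) =
  \sum_(q <- deal 2 w) \sum_(r <- deal n (pile q 0)) Phi (insf j (pile q 1) (pile r)).
Proof.
elim: w => [|v w IH] n j Phi hjn.
  rewrite !deal_nil !big_seq1 !pile_nseq.
  congr Phi; apply: functional_extensionality => i; rewrite /insf.
  by case: ifP => _ //; case: ifP.
rewrite deal_cons (IH n j (fun g => \sum_(i <- iota 0 n.+1) Phi (upd g i v)) hjn).
rewrite (deal2_cons v w (fun a b => \sum_(r <- deal n a) Phi (insf j b (pile r)))).
apply: eq_bigr => q _.
rewrite (deal_cons n v (pile q 0) (fun g => Phi (insf j (pile q 1) g))) -big_split /=.
apply: eq_bigr => r _; exact: key_ins.
Qed.





Lemma sml_zero (k : fieldType) (V W : lmodType k) (f : seq V -> W) :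
  SymMultilin f -> forall a1 a2, f (a1 ++ 0 :: a2) = 0.
Proof.
move=> hf a1 a2; have := hf.2 a1 a2 1 0 0.
rewrite scaler0 addr0 scale1r => h.
by apply: (@addrI _ (f (a1 ++ 0 :: a2))); rewrite addr0 -h.
Qed.

Lemma sml_add (k : fieldType) (V W : lmodType k) (f : seq V -> W) :
  SymMultilin f -> forall a1 a2 u v,
  f (a1 ++ (u + v) :: a2) = f (a1 ++ u :: a2) + f (a1 ++ v :: a2).
Proof. by move=> hf a1 a2 u v; have := hf.2 a1 a2 1 u v; rewrite !scale1r. Qed.

Lemma sml_sum (k : fieldType) (V W : lmodType k) (f : seq V -> W) (I : Type) (r : seq I) (g : I -> V) :
  SymMultilin f -> forall a1 a2,
  f (a1 ++ (\sum_(i <- r) g i) :: a2) = \sum_(i <- r) f (a1 ++ g i :: a2).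
Proof.
move=> hf a1 a2; elim: r => [|x r IH]; first by rewrite !big_nil sml_zero.
by rewrite !big_cons sml_add // IH.
Qed.

Lemma sml_cons (k : fieldType) (V W : lmodType k) (f : seq V -> W) c :
  SymMultilin f -> SymMultilin (fun s => f (c :: s)).
Proof.
move=> hf; split.
  move=> a b hab; apply: hf.1; by rewrite perm_cons.
move=> a1 a2 d u v; exact: (hf.2 (c :: a1) a2 d u v).
Qed.

Lemma sml_swap (k : fieldType) (V W : lmodType k) (f : seq V -> W) a b s :
  SymMultilin f -> f (a :: b :: s) = f (b :: a :: s).
Proof.
move=> hf; apply: hf.1.
by rewrite -[a :: b :: s]/([:: a] ++ [:: b] ++ s) perm_catCA.
Qed.

Lemma L1 (k : fieldType) (V W : lmodType k) (u : seq V) :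
  forall n (K : seq V -> W), SymMultilin K ->
  \sum_(q <- deal 2 u) (if size (pile q 0) == n then K (piVw (pile q 1) :: pile q 0) else 0)
  = if size u == n.+1 then n.+1%:R *: K u else 0.
Proof.
elim: u => [|v u IH] n K hK.
  rewrite deal_nil big_seq1 !pile_nseq /=.
  case: ifP => _ //; exact: (sml_zero hK [::] [::]).
rewrite (deal2_cons v u (fun a b => if size a == n then K (piVw b :: a) else 0)) big_split /=.
have -> : \sum_(q <- deal 2 u)
   (if size (pile q 0) == n then K (piVw (v :: pile q 1) :: pile q 0) else 0) =
   \sum_(q <- deal 2 u) (match pile q 1 with [::] =>
       (fun a => if size a == n then K (v :: a) else 0) (pile q 0) | _ => 0 end).
  apply: eq_bigr => q _; case: (pile q 1) => [|a l] //=.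
  case: ifP => // _; exact: (sml_zero hK [::]).
rewrite (deal2_nil1 u (fun a => if size a == n then K (v :: a) else 0)).
case: n => [|m].
  rewrite big1 ?add0r; last by move=> q _.
  by rewrite /= scale1r.
have -> : \sum_(q <- deal 2 u)
   (if (size (pile q 0)).+1 == m.+1 then K (piVw (pile q 1) :: v :: pile q 0) else 0) =
   \sum_(q <- deal 2 u)
   (if size (pile q 0) == m then (fun s => K (v :: s)) (piVw (pile q 1) :: pile q 0) else 0).
  apply: eq_bigr => q _ /=; by rewrite eqSS (sml_swap _ _ _ hK).
rewrite (IH m _ (sml_cons v hK)) /= eqSS.
case: ifP => _; last by rewrite addr0.
by rewrite -[m.+2]addn1 natrD scalerDl scale1r.
Qed.

Lemma map_insf0 (T U : Type) (g : seq T -> U) b f n :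
  [seq g (insf 0 b f i) | i <- iota 0 n.+1] = g b :: [seq g (f i) | i <- iota 0 n].
Proof.
rewrite /= -[iota 1 n]/(iota (1 + 0) n) iotaDl -map_comp.
congr (_ :: _); apply: eq_map => i /=; by rewrite add1n.
Qed.

Lemma sum_piv (k : fieldType) (V W : lmodType k) n :
  forall (u : seq V) (K : seq V -> W), SymMultilin K ->
  \sum_(r <- deal n u) K [seq piVw (pile r i) | i <- iota 0 n] =
  if size u == n then n`!%:R *: K u else 0.
Proof.
elim: n => [|n IH] u K hK.
  case: u => [|v u]; first by rewrite deal_nil big_seq1 /= scale1r.
  rewrite (deal_cons 0 v u (fun g => K [seq piVw (g i) | i <- iota 0 0])) /=.
  by rewrite big1 // => p _; rewrite big_nil.
rewrite (deal_split u (fun g => K [seq piVw (g i) | i <- iota 0 n.+1]) (leq0n n)).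
have -> : \sum_(q <- deal 2 u) \sum_(r <- deal n (pile q 0))
    K [seq piVw (insf 0 (pile q 1) (pile r) i) | i <- iota 0 n.+1] =
  \sum_(q <- deal 2 u) (n`!%:R *: (if size (pile q 0) == n then
        K (piVw (pile q 1) :: pile q 0) else 0)).
  apply: eq_bigr => q _.
  under eq_bigr => r _ do rewrite (map_insf0 (@piVw k V)).
  rewrite (IH (pile q 0) (fun s => K (piVw (pile q 1) :: s)) (sml_cons _ hK)).
  by case: ifP; rewrite ?scaler0.
rewrite -scaler_sumr L1 //; case: ifP; rewrite ?scaler0 // => _.
by rewrite scalerA -natrM mulnC -factS.
Qed.



Definition ej (T : Type) (j : nat) (y : T) : nat -> seq T := upd (fun _ => [::]) j y.

Lemma deal_y (k : fieldType) (V : lmodType k) (R : zmodType) m (y : V)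
  (Phi : (nat -> seq V) -> R) :
  \sum_(p <- deal m [:: y]) Phi (pile p) = \sum_(j <- iota 0 m) Phi (ej j y).
Proof. by rewrite deal_cons deal_nil big_seq1 pile_nseq. Qed.

Lemma perm_mid (T : eqType) (s1 s2 : seq T) x : perm_eq (s1 ++ x :: s2) (x :: s1 ++ s2).
Proof. by rewrite -[x :: s2]cat1s perm_catCA. Qed.

Lemma WL (k : fieldType) (V : lmodType k) (F : seq V -> seq V -> V) (y : V) n j b f :
  unital F -> (j <= n)%N ->
  perm_eq [seq F (insf j b f i) (ej j y i) | i <- iota 0 n.+1]
          (F b [:: y] :: [seq piVw (f i) | i <- iota 0 n]).
Proof.
move=> hF hjn.
have e1 : iota 0 n.+1 = iota 0 j ++ j :: [seq 1 + i | i <- iota j (n - j)]%N.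
  by rewrite -iotaDl add1n -{1}(subnKC (leqW hjn)) iotaD add0n subSn.
have e2 : iota 0 n = iota 0 j ++ iota j (n - j).
  by rewrite -{1}(subnKC hjn) iotaD.
rewrite e1 e2 !map_cat /= -map_comp.
rewrite /insf /ej /upd ltnn !eqxx.
have -> : [seq F (if (i < j)%N then f i else if i == j then b else f i.-1)
              (if i == j then [:: y] else [::]) | i <- iota 0 j] =
          [seq piVw (f i) | i <- iota 0 j].
  apply/eq_in_map => i; rewrite mem_iota /= => hi.
  by rewrite hi (ltn_eqF hi) (hF _).1.
have -> : [seq ((fun i => F (if (i < j)%N then f i else if i == j then b else f i.-1)
              (if i == j then [:: y] else [::])) \o addn 1) i | i <- iota j (n - j)] =
          [seq piVw (f i) | i <- iota j (n - j)].
  apply/eq_in_map => i; rewrite mem_iota /= => /andP [hi _].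
  have h1 : (j < 1 + i)%N by rewrite add1n ltnS.
  by rewrite ltnNge (ltnW h1) /= (gtn_eqF h1) add0n (hF _).1.
exact: perm_mid.
Qed.

Lemma Zval (k : fieldType) (V : lmodType k) (F : seq V -> seq V -> V) (H : seq V -> V)
  (y : V) (w : seq V) n :
  unital F -> SymMultilin H ->
  \sum_(pa <- deal n.+1 w) \sum_(pb <- deal n.+1 [:: y])
     H [seq F (pile pa i) (pile pb i) | i <- iota 0 n.+1] =
  n.+1`!%:R *: \sum_(q <- deal 2 w)
     (if size (pile q 0) == n then H (pile q 0 ++ [:: F (pile q 1) [:: y]]) else 0).
Proof.
move=> hF hH.
under eq_bigr => pa _ do
  rewrite (deal_y n.+1 y (fun g => H [seq F (pile pa i) (g i) | i <- iota 0 n.+1])).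
rewrite exchange_big.
transitivity (\sum_(j <- iota 0 n.+1) (n`!%:R *: \sum_(q <- deal 2 w)
     (if size (pile q 0) == n then H (pile q 0 ++ [:: F (pile q 1) [:: y]]) else 0))).
  apply: eq_big_seq => j; rewrite mem_iota add0n ltnS /= => hj.
  rewrite (deal_split w (fun g => H [seq F (g i) (ej j y i) | i <- iota 0 n.+1]) hj).
  rewrite scaler_sumr; apply: eq_bigr => q _.
  under eq_bigr => r _ do rewrite (hH.1 _ _ (WL y (pile q 1) (pile r) hF hj)).
  rewrite (sum_piv n (pile q 0) (sml_cons (F (pile q 1) [:: y]) hH)).
  case: ifP => _; rewrite ?scaler0 //.
  congr (_ *: _); apply: hH.1; by rewrite perm_sym -cat1s perm_catC.
rewrite -[iota 0 n.+1]/(index_iota 0 n.+1) sumr_const_nat subn0 -scaler_nat.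
by rewrite scalerA -natrM -factS.
Qed.



Lemma sum_ind (R : zmodType) N s (X : R) : (s < N)%N ->
  \sum_(m <- iota 0 N) (if s == m then X else 0) = X.
Proof.
move=> hs; rewrite (bigD1_seq s) ?iota_uniq ?mem_iota //= eqxx big1 ?addr0 //.
by move=> m /negbTE; rewrite eq_sym => ->.
Qed.

Lemma goalA (k : fieldType) (V : lmodType k) (F : seq V -> seq V -> V) (H : seq V -> V)
  (y : V) (w : seq V) :
  [pchar k] =i pred0 -> unital F -> SymMultilin H ->
  \sum_(r <- Fprime F w [:: y]) r.1 *: H r.2 =
  \sum_(q <- deal 2 w) H (pile q 0 ++ [:: F (pile q 1) [:: y]]).
Proof.
move=> hchar hF hH.
have hc : forall n, (n%:R == 0 :> k) = (n == 0)%N := (pcharf0P k).1 hchar.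
transitivity (\sum_(n <- iota 0 (size w + size [:: y]).+1) (n`!%:R^-1 *:
   \sum_(pa <- deal n w) \sum_(pb <- deal n [:: y])
      H [seq F (pile pa i) (pile pb i) | i <- iota 0 n])).
  rewrite /Fprime big_flatten big_map; apply: eq_bigr => n _.
  rewrite big_allpairs_dep scaler_sumr; apply: eq_bigr => pa _.
  by rewrite scaler_sumr.
rewrite (_ : (size w + size [:: y]).+1 = (size w).+2)%N; last by rewrite /= addn1.
rewrite -[iota 0 (size w).+2]/(0%N :: iota 1 (size w).+1) big_cons.
have -> : deal 0 [:: y] = [::] by [].
have -> : \sum_(pa <- deal 0 w) \sum_(pb <- [::]) H [seq F (pile pa i) (pile pb i) | i <- iota 0 0] = 0.
  by rewrite big1 // => pa _; rewrite big_nil.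
rewrite scaler0 add0r.
rewrite -[iota 1 _]/(iota (1 + 0) (size w).+1) iotaDl big_map.
transitivity (\sum_(m <- iota 0 (size w).+1) \sum_(q <- deal 2 w)
     (if size (pile q 0) == m then H (pile q 0 ++ [:: F (pile q 1) [:: y]]) else 0)).
  apply: eq_bigr => m _; rewrite add1n (@Zval _ _ F H y w m hF hH) scalerA mulVf ?scale1r //.
  by rewrite hc -lt0n fact_gt0.
rewrite exchange_big; apply: eq_big_seq => q hq.
by rewrite sum_ind // ltnS (deal_size hq).
Qed.

Lemma deal1 (k : fieldType) (V : lmodType k) (u : seq V) : deal 1 u = [:: [:: u]].
Proof. elim: u => [|v u IH] //=; by rewrite IH. Qed.

Lemma Fprime_x (k : fieldType) (V : lmodType k) (F : seq V -> seq V -> V) (x : V) (u : seq V) :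
  \sum_(r <- Fprime F u [:: x]) r.1 *: piVw r.2 = F u [:: x].
Proof.
rewrite /Fprime big_flatten big_map.
rewrite (_ : (size u + size [:: x]).+1 = (size u).+2)%N; last by rewrite /= addn1.
rewrite -[iota 0 (size u).+2]/(0%N :: 1%N :: iota 2 (size u)) !big_cons.
rewrite big_allpairs_dep big1; last by move=> pa _; rewrite big_nil.
rewrite Monoid.simpm !deal1 big_allpairs_dep !big_seq1 /= invr1 scale1r /pile /=.
rewrite big1_seq ?addr0 //.
move=> n; rewrite mem_iota => /andP [_ /andP [hn _]].
rewrite big_allpairs_dep big1 // => pa _; rewrite big1 // => pb _.
case: n hn => [|[|n]] hn; [by [] | by [] | by rewrite /= scaler0].
Qed.



Lemma insf_lt (T : Type) j (b : seq T) f i : (i < j)%N -> insf j b f i = f i.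
Proof. by rewrite /insf => ->. Qed.
Lemma insf_eq (T : Type) j (b : seq T) f : insf j b f j = f j \/ insf j b f j = b.
Proof. by right; rewrite /insf ltnn eqxx. Qed.
Lemma insf_eq' (T : Type) j (b : seq T) f : insf j b f j = b.
Proof. by rewrite /insf ltnn eqxx. Qed.

Lemma nabla_adapted (k : fieldType) (V : lmodType k) (F : seq V -> seq V -> V)
  (ld : seq V -> V -> V) (A : seq V -> V) (y : V) (w : seq V) :
  is_bilinear_map F -> is_left_division F ld ->
  nabla F ld A (adapted F y) w = 0.
Proof.
move=> hF hld; rewrite /nabla /adapted; apply/eqP; rewrite subr_eq0; apply/eqP.
rewrite (@deal_split _ _ _ w 3 3
  (fun g => F (g 0%N ++ [:: A (g 1%N)]) [:: ld (g 2%N) (F (g 3%N) [:: y])]) (leqnn 3)).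
symmetry.
transitivity (\sum_(q <- deal 2 w) \sum_(s <- deal 2 (pile q 0)) \sum_(r <- deal 2 (pile s 0))
   F (pile r 0 ++ [:: A (pile r 1)]) [:: ld (pile s 1) (F (pile q 1) [:: y])]).
  apply: eq_bigr => q _.
  rewrite (@deal_split _ _ _ (pile q 0) 2 2 (fun g => F (insf 3 (pile q 1) g 0 ++
     [:: A (insf 3 (pile q 1) g 1)]) [:: ld (insf 3 (pile q 1) g 2) (F (insf 3 (pile q 1) g 3) [:: y])]) (leqnn 2)).
  apply: eq_bigr => s _; apply: eq_bigr => r _.
  by rewrite /insf /=.
rewrite (coassoc w (fun a c b => \sum_(r <- deal 2 a)
   F (pile r 0 ++ [:: A (pile r 1)]) [:: ld c (F b [:: y])])) /=.
rewrite -(deal2_nil1 w (fun a => \sum_(p <- deal 2 a) F (pile p 0 ++ [:: A (pile p 1)]) [:: y])).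
apply: eq_bigr => q _; rewrite exchange_big /=.
transitivity (\sum_(r <- deal 2 (pile q 0)) F (pile r 0 ++ [:: A (pile r 1)])
   [:: match pile q 1 with [::] => y | _ => 0 end]).
  apply: eq_bigr => r _.
  have := sml_sum (deal 2 (pile q 1)) (fun s => ld (pile s 0) (F (pile s 1) [:: y])) (hF.2 (pile r 0 ++ [:: A (pile r 1)])) [::] [::].
  rewrite /= => <-; by rewrite hld.2.2.1.
case: (pile q 1) => [|a l] //.
by rewrite big1 // => r _; exact: (sml_zero (hF.2 _) [::] [::]).
Qed.



Lemma lext_fmul_vec (k : fieldType) (V : lmodType k) (F : seq V -> seq V -> V)
  (g : seq V -> V) (nu : kV V) (z : V) :
  lext g (fmul F nu (vec z)) =
  \sum_(p <- nu) p.1 *: \sum_(r <- Fprime F p.2 [:: z]) r.1 *: g r.2.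
Proof.
rewrite /lext /fmul big_flatten big_allpairs_dep; apply: eq_bigr => p _.
rewrite big_seq1 big_map scaler_sumr; apply: eq_bigr => r _.
by rewrite /= mulr1 scalerA.
Qed.

Lemma torsion_word (k : fieldType) (V : lmodType k) (F : seq V -> seq V -> V)
  (ld : seq V -> V -> V) (x y : V) (w : seq V) :
  is_bilinear_map F -> is_left_division F ld ->
  torsion F ld (adapted F x) (adapted F y) w =
  \sum_(q <- deal 2 w) F (pile q 0 ++ [:: F (pile q 1) [:: y]]) [:: x] -
  \sum_(q <- deal 2 w) F (pile q 0 ++ [:: F (pile q 1) [:: x]]) [:: y].
Proof.
move=> hF hld; rewrite /torsion !nabla_adapted // subrr sub0r /bracket.
by rewrite big_split /= sumrN opprD opprK addrC.
Qed.

Lemma side (k : fieldType) (V : lmodType k) (F : seq V -> seq V -> V) (x y : V) (mu : kV V) :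
  [pchar k] =i pred0 -> is_bilinear_map F -> unital F ->
  piV (fmul F (fmul F mu (vec y)) (vec x)) =
  \sum_(p <- mu) p.1 *: \sum_(q <- deal 2 p.2) F (pile q 0 ++ [:: F (pile q 1) [:: y]]) [:: x].
Proof.
move=> hc hF hu; rewrite /piV lext_fmul_vec.
under eq_bigr => p _ do rewrite Fprime_x.
rewrite -/(lext (fun s => F s [:: x]) _) lext_fmul_vec; apply: eq_bigr => p _.
by rewrite (@goalA _ _ F (fun s => F s [:: x])) //; exact: hF.1.
Qed.

Theorem mainTheorem11 (k : fieldType) (V : lmodType k)
    (F : seq V -> seq V -> V) (ld : seq V -> V -> V) :
  [pchar k] =i pred0 ->
  is_bilinear_map F ->
  unital F ->
  is_left_division F ld ->
  forall (x y : V) (mu : kV V),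
    lext (torsion F ld (adapted F x) (adapted F y)) mu =
    piV (ksub (fmul F (fmul F mu (vec y)) (vec x))
              (fmul F (fmul F mu (vec x)) (vec y))).
Proof.
move=> hc hF hu hld x y mu.
have -> : forall a b : kV V, piV (ksub a b) = piV a - piV b.
  move=> a b; rewrite /piV /lext /ksub big_cat big_map /= -sumrN.
  by congr (_ + _); apply: eq_bigr => p _; rewrite scaleNr.
rewrite !side // /lext -sumrB; apply: eq_bigr => p _.
by rewrite torsion_word // scalerBr.
Qed.
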